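(* Let $\{X_t\}_{t\ge0}$ be a continuous-time Markov chain with finite state space $S=\{1,\dots,N\}$ and infinitesimal generator $Q=(q_{ij})$ with $q_{ij}>0$ for all $i\ne j$ and $q_{ii}=-\sum_{j\ne i}q_{ij}$. Then the chain is in equilibrium (i.e. reversible, equivalently there is a probability distribution $\pi$ on $S$ with $\pi_i q_{ij}=\pi_j q_{ji}$ for all $i\ne j$) if and only if for every triple $(i,i+1,i+1+j)$ with $1\le i\le N-2$ and $1\le j\le N-(i+1)$ the determinant $$\Delta_{(i,i+1,i+1+j)}:=\begin{vmatrix} q_{i,i+1} & -q_{i+1,i} & 0\\ q_{i,i+1+j} & 0 & -q_{i+1+j,i}\\ 0 & q_{i+1,i+1+j} & -q_{i+1+j,i+1}\end{vmatrix}$$ equals zero.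
   Context: The chain (started from a distribution $\pi$) is said to be in equilibrium if for all $n$, all $x_0,\dots,x_n\in S$ and all $0\le t_0<t_1<\dots<t_n$, $\mathbb{P}(X_{t_0}=x_0,\dots,X_{t_n}=x_n)=\mathbb{P}(X_{t_0}=x_n,\dots,X_{t_n}=x_0)$; this is equivalent to the detailed balance condition $\pi_i q_{ij}=\pi_j q_{ji}$ for all $i\ne j$, where $\pi$ is an invariant distribution ($\pi Q=0$). *)

(* Defs.v *)
(* States S = {1,...,N} are represented by 'I_N (0-based). *)
From mathcomp Require Import all_boot all_order all_algebra.
From mathcomp Require Import reals.
Set Implicit Arguments. Unset Strict Implicit. Unset Printing Implicit Defensive.
Import Order.TTheory GRing.Theory Num.Theory.
Local Open Scope ring_scope.

Definition positive_generator (R : realType) (N : nat) (Q : 'M[R]_N) : Prop :=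
  (forall i j : 'I_N, i != j -> 0 < Q i j) /\
  (forall i : 'I_N, Q i i = - \sum_(j < N | j != i) Q i j).

Definition prob_distr (R : realType) (N : nat) (pi : 'rV[R]_N) : Prop :=
  (forall i : 'I_N, 0 <= pi 0 i) /\ \sum_(i < N) pi 0 i = 1.

Definition in_equilibrium (R : realType) (N : nat) (Q : 'M[R]_N) : Prop :=
  exists pi : 'rV[R]_N,
    prob_distr pi /\ pi *m Q = 0 /\
    (forall i j : 'I_N, i != j -> pi 0 i * Q i j = pi 0 j * Q j i).

Definition mx3 (R : realType) (a b c d e f g h k : R) : 'M[R]_3 :=
  \matrix_(r < 3, s < 3)
     nth 0 (nth [::] [:: [:: a; b; c]; [:: d; e; f]; [:: g; h; k]] r) s.

Definition Delta (R : realType) (N : nat) (Q : 'M[R]_N) (x y z : 'I_N) : R :=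
  \det (mx3 (Q x y) (- Q y x) 0
            (Q x z) 0 (- Q z x)
            0 (Q y z) (- Q z y)).

(* Main.v *)
Require Import Defs.
From mathcomp Require Import all_boot all_order all_algebra.
From mathcomp Require Import reals ring zify.
Import Order.TTheory GRing.Theory Num.Theory.
Local Open Scope ring_scope.

Lemma DeltaE (R : realType) N (Q : 'M[R]_N) x y z :
  Delta Q x y z = Q x y * Q z x * Q y z - Q y x * Q x z * Q z y.
Proof.
rewrite /Delta (expand_det_row _ ord0) !big_ord_recr big_ord0 /=.
rewrite /cofactor !(expand_det_row _ ord0) !big_ord_recr !big_ord0 /=.
rewrite /cofactor !det_mx11 !mxE /=.
rewrite /mx3 ?mxE /=.
ring.
Qed.

Lemma alg_fwd {R : realType} (pa pb pc qab qba qbc qcb qac qca : R) :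
  pa != 0 -> pa * qab = pb * qba -> pb * qbc = pc * qcb -> pc * qca = pa * qac ->
  qab * qca * qbc - qba * qac * qcb = 0.
Proof.
move=> pa0 E1 E2 E3; apply: (mulIf pa0); rewrite mul0r.
have E1' : pa * qab - pb * qba = 0 by rewrite E1 subrr.
have E2' : pb * qbc - pc * qcb = 0 by rewrite E2 subrr.
have E3' : pc * qca - pa * qac = 0 by rewrite E3 subrr.
have -> : (qab * qca * qbc - qba * qac * qcb) * pa =
  qbc * qca * (pa * qab - pb * qba) + qba * qca * (pb * qbc - pc * qcb)
  + qba * qcb * (pc * qca - pa * qac) by ring.
by rewrite E1' E2' E3' !mulr0 !addr0.
Qed.

Arguments alg_fwd {R pa pb pc qab qba qbc qcb qac qca}.

Lemma alg_bwd {R : realType} (fi fj fk qab qba qbc qcb qac qca : R) :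
  qcb != 0 -> qba != 0 -> fi * qab = fj * qba -> fj * qbc = fk * qcb ->
  qab * qca * qbc - qba * qac * qcb = 0 -> fi * qac = fk * qca.
Proof.
move=> h1 h2 A B C; apply/eqP; rewrite -subr_eq0; apply/eqP.
apply: (mulIf (mulf_neq0 h1 h2)); rewrite mul0r.
have A' : fi * qab - fj * qba = 0 by rewrite A subrr.
have B' : fj * qbc - fk * qcb = 0 by rewrite B subrr.
have -> : (fi * qac - fk * qca) * (qcb * qba) =
  - fi * (qab * qca * qbc - qba * qac * qcb) + qbc * qca * (fi * qab - fj * qba)
  + qba * qca * (fj * qbc - fk * qcb) by ring.
by rewrite A' B' C !mulr0 !addr0.
Qed.

Arguments alg_bwd {R fi fj fk qab qba qbc qcb qac qca}.

Lemma rowsum0 (R : realType) N (Q : 'M[R]_N) (hQ : positive_generator Q) j :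
  \sum_i Q j i = 0.
Proof. by rewrite (bigD1 j) //= hQ.2 addNr. Qed.

Lemma db_inv (R : realType) N (Q : 'M[R]_N) (hQ : positive_generator Q)
  (pi : 'rV[R]_N) :
  (forall i j : 'I_N, i != j -> pi 0 i * Q i j = pi 0 j * Q j i) ->
  pi *m Q = 0.
Proof.
move=> DB; apply/rowP => j; rewrite !mxE.
rewrite (eq_bigr (fun i => pi 0 j * Q j i)); last first.
  by move=> i _; case: (eqVneq i j) => [->|h] //; exact: DB.
by rewrite -mulr_sumr rowsum0 // mulr0.
Qed.

Theorem mainTheorem3 (R : realType) (N : nat) (hN : (0 < N)%N)
  (Q : 'M[R]_N) (hQ : positive_generator Q) :
  in_equilibrium Q <->
  (forall a b c : 'I_N,
     nat_of_ord b = (nat_of_ord a).+1 -> (nat_of_ord b < nat_of_ord c)%N ->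
     Delta Q a b c = 0).
Proof.
split.
  move=> [pi [[pge psum] [_ DB]]] a b c hb hc.
  have neq : forall u v : 'I_N, nat_of_ord u != nat_of_ord v -> u != v.
    by move=> u v; apply: contra => /eqP ->.
  have ab : a != b by apply: neq; rewrite hb; lia.
  have bc : b != c by apply: neq; lia.
  have ca : c != a by apply: neq; lia.
  have pa0 : pi 0 a != 0.
    apply/eqP => pa0.
    have all0 : forall j, pi 0 j = 0.
      move=> j; case: (eqVneq j a) => [->//|ja].
      have := DB j a ja; rewrite pa0 mul0r => /eqP; rewrite mulf_eq0 => /orP [/eqP//|].
      by rewrite gt_eqF // hQ.1.
    by move: psum; rewrite big1 // => /esym/eqP; rewrite oner_eq0.
  rewrite DeltaE.
  exact: (alg_fwd pa0 (DB _ _ ab) (DB _ _ bc) (DB _ _ ca)).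
move=> HD.
case: N hN Q hQ HD => // n _ Q hQ HD.
pose r (i : nat) := Q (inord i) (inord i.+1) / Q (inord i.+1) (inord i).
pose f (k : nat) := \prod_(i < k) r i.
have fS k : f k.+1 = f k * r k by rewrite /f big_ord_recr.
have qpos : forall i j : nat, (i < n.+1)%N -> (j < n.+1)%N -> i != j ->
    0 < Q (inord i) (inord j).
  move=> i j hi hj ij; apply: hQ.1; apply: contra ij => /eqP/(congr1 (@nat_of_ord _)).
  by rewrite !inordK // => ->.
have fpos k : (k <= n)%N -> 0 < f k.
  move=> hk; apply: prodr_gt0 => i _; apply: divr_gt0; apply: qpos; have := ltn_ord i; lia.
have rel1 i : (i < n)%N ->
    f i * Q (inord i) (inord i.+1) = f i.+1 * Q (inord i.+1) (inord i).
  move=> hi; rewrite fS /r -mulrA mulfVK //.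
  by rewrite gt_eqF // qpos //; lia.
have rel : forall d i, (i + d.+1 <= n)%N ->
    f i * Q (inord i) (inord (i + d.+1)%N) =
    f (i + d.+1)%N * Q (inord (i + d.+1)%N) (inord i).
  elim=> [|d IH] i hi; first by rewrite addn1; apply: rel1; lia.
  have B := IH i.+1 ltac:(lia).
  rewrite addSn -addnS in B.
  apply: (alg_bwd _ _ (rel1 i ltac:(lia)) B).
  - by rewrite gt_eqF // qpos //; lia.
  - by rewrite gt_eqF // qpos //; lia.
  - rewrite -DeltaE; apply: HD; rewrite !inordK //; lia.
have relo : forall i j : 'I_n.+1, (i < j)%N -> f i * Q i j = f j * Q j i.
  move=> i j ij.
  have e : nat_of_ord j = (i + (j - i - 1).+1)%N by lia.
  have := rel (j - i - 1)%N i ltac:(have := ltn_ord j; lia).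
  by rewrite -e !inord_val.
pose s := \sum_(j < n.+1) f j.
have spos : 0 < s.
  rewrite /s (bigD1 ord0) //= ltr_wpDr //; last exact: fpos.
  by apply: sumr_ge0 => i _; apply/ltW/fpos; have := ltn_ord i; lia.
have fo (j : 'I_n.+1) : 0 < f j by apply: fpos; have := ltn_ord j; lia.
pose pi := \row_(j < n.+1) (f j / s).
have DB : forall i j : 'I_n.+1, i != j -> pi 0 i * Q i j = pi 0 j * Q j i.
  move=> i j ij; rewrite !mxE mulrAC [f j / s * _]mulrAC.
  case: (ssrnat.ltngtP i j) => h.
  - by rewrite (relo i j h).
  - by rewrite (relo j i h).
  - by move: ij; rewrite (val_inj h) eqxx.
exists pi; split; last split.
- split.
  + by move=> i; rewrite mxE divr_ge0 // ltW.
  + under eq_bigr do rewrite mxE.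
    by rewrite -mulr_suml divff // gt_eqF.
- exact: db_inv.
- exact: DB.
Qed.
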